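(* Let $n>1$ and $k\ge 1$ be integers and let $t_1,\ldots,t_k$ be positive divisors of $n$. There exists $\varepsilon<1$ such that the family GRDH with parameters $n,k,t_1,\ldots,t_k$ is $\varepsilon$-almost-$\Delta$-universal if and only if $n$ is odd and $t_1=\cdots=t_k=1$. Moreover, if $n$ is odd and $t_1=\cdots=t_k=1$, then GRDH (i.e., RDH) is $\frac{1}{p-1}$-almost-$\Delta$-universal, where $p$ is the smallest prime divisor of $n$, and this bound is tight: there exist distinct $\mathbf{m},\mathbf{m}'\in\mathbb{Z}_n^k$ and $b\in\mathbb{Z}_n$ with $\Pr_{\mathbf{x}}[\Upsilon_{\mathbf{x}}(\mathbf{m})-\Upsilon_{\mathbf{x}}(\mathbf{m}')=b]=\frac{1}{p-1}$.
   Context: Let $n>1$, $k\ge1$ be integers and $t_1,\ldots,t_k$ positive divisors of $n$. The family GRDH consists of the functions $\Upsilon_{\mathbf{x}}:\mathbb{Z}_n^k\to\mathbb{Z}_n$, $\Upsilon_{\mathbf{x}}(\mathbf{m})=\sum_{i=1}^k m_ix_i \bmod n$, indexed by keys $\mathbf{x}=\langle x_1,\ldots,x_k\rangle\in\mathbb{Z}_n^k$ satisfying $\gcd(x_i,n)=t_i$ for $1\le i\le k$. When $t_1=\cdots=t_k=1$ the family is called RDH. All probabilities are over a key chosen uniformly at random from the set of admissible keys. The family is $\varepsilon$-almost-$\Delta$-universal if for all distinct $\mathbf{m},\mathbf{m}'\in\mathbb{Z}_n^k$ and all $b\in\mathbb{Z}_n$, $\Pr_{\mathbf{x}}[\Upsilon_{\mathbf{x}}(\mathbf{m})-\Upsilon_{\mathbf{x}}(\mathbf{m}')=b]\le\varepsilon$,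 subtraction taken in $\mathbb{Z}_n$. *)

(* Defs.v *)
From HB Require Import structures.
From mathcomp Require Import all_boot all_order all_algebra.
Set Implicit Arguments. Unset Strict Implicit. Unset Printing Implicit Defensive.
Import Order.TTheory GRing.Theory Num.Theory.

(* Elements of Z_n are represented by 'I_n (values 0..n-1); vectors in Z_n^k
   by finite functions {ffun 'I_k -> 'I_n}. *)

Definition grdh_keys (n k : nat) (t : 'I_k -> nat) : {set {ffun 'I_k -> 'I_n}} :=
  [set x : {ffun 'I_k -> 'I_n} | [forall i, gcdn (x i) n == t i]].

Definition upsilon (n k : nat) (x m : {ffun 'I_k -> 'I_n}) : nat :=
  (\sum_(i < k) (m i : nat) * (x i : nat)) %% n.

Definition upsilon_diff (n k : nat) (x m m' : {ffun 'I_k -> 'I_n}) : nat :=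
  (upsilon x m + (n - upsilon x m')) %% n.

Definition grdh_prob (n k : nat) (t : 'I_k -> nat)
    (m m' : {ffun 'I_k -> 'I_n}) (b : 'I_n) : rat :=
  (#|[set x in grdh_keys n t | upsilon_diff x m m' == b]|%:R
    / #|grdh_keys n t|%:R)%R.

Definition almost_delta_universal (n k : nat) (t : 'I_k -> nat) (eps : rat) : Prop :=
  forall (m m' : {ffun 'I_k -> 'I_n}) (b : 'I_n), m != m' ->
    (grdh_prob t m m' b <= eps)%R.

(* Main.v *)
Require Import Defs.
From HB Require Import structures.
From mathcomp Require Import all_boot all_order all_algebra zify.
Import Order.TTheory GRing.Theory Num.Theory.
Set Implicit Arguments. Unset Strict Implicit.

Lemma valZpM n' (x y : 'I_n'.+2) : val (x * y)%R = (x * y) %% n'.+2.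
Proof. by []. Qed.
Lemma valZpB n' (x y : 'I_n'.+2) : val (x - y)%R = (x + (n'.+2 - y)) %% n'.+2.
Proof. by rewrite /= modnDmr. Qed.

Lemma valZpn n' a : val (a%:R : 'I_n'.+2)%R = a %% n'.+2.
Proof. by rewrite Zp_nat. Qed.

Lemma valZpn' n' a : nat_of_ord (a%:R : 'I_n'.+2)%R = a %% n'.+2.
Proof. by rewrite Zp_nat. Qed.

Lemma upsilon_ring n' k (x m : {ffun 'I_k -> 'I_n'.+2}) :
  upsilon x m = val (\sum_i m i * x i)%R.
Proof.
rewrite /upsilon.
have -> : (\sum_i m i * x i)%R = ((\sum_(i < k) (m i : nat) * (x i : nat))%N%:R)%R :> 'I_n'.+2.
  by rewrite natr_sum; apply: eq_bigr => i _; rewrite natrM !natr_Zp.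
by rewrite valZpn.
Qed.

Lemma upsilon_diff_ring n' k (x m m' : {ffun 'I_k -> 'I_n'.+2}) :
  upsilon_diff x m m' = val (\sum_i (m i - m' i) * x i)%R.
Proof.
rewrite /upsilon_diff !upsilon_ring -valZpB; congr val.
by rewrite -sumrB; apply: eq_bigr => i _; rewrite mulrBl.
Qed.

Lemma nt_cancel n d u w : 0 < n -> d * u = d * w %[mod n] -> u = w %[mod n %/ gcdn d n].
Proof.
move=> n0; set g := gcdn d n.
have g0 : 0 < g by rewrite gcdn_gt0 n0 orbT.
have eD : d = g * (d %/ g) by rewrite mulnC divnK // dvdn_gcdl.
have eN : n = g * (n %/ g) by rewrite mulnC divnK // dvdn_gcdr.
have cop : coprime (n %/ g) (d %/ g).
  rewrite /coprime; apply/eqP; apply/eqP; rewrite -(eqn_pmul2l g0) muln_gcdr.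
  by rewrite -eN -eD muln1 gcdnC.
wlog le : u w / u <= w.
  move=> H; case: (leqP u w) => [|/ltnW] h E; first exact: H.
  by apply/esym/H => //; apply/esym.
move=> E; apply/esym/eqP; rewrite eqn_mod_dvd //.
have : d * w == d * u %[mod n] by rewrite E.
rewrite eqn_mod_dvd ?leq_mul // -mulnBr.
by rewrite {1}eN {1}eD -mulnA dvdn_pmul2l // Gauss_dvdr.
Qed.

Lemma units_mod n q r : 1 < n -> prime q -> q %| n -> 0 < r < q ->
  exists c, coprime n c /\ c %% q = r.
Proof.
move=> n1 qp qn /andP[r0 rq].
have n0 : 0 < n by apply: ltnW.
set Q := n`_q; set N := n`_q^'.
have nQ : Q * N = n by apply: partnC.
have cQN : coprime Q N by apply: coprime_partC.
have e0 : 0 < logn q n by rewrite logn_gt0 mem_primes qp n0 qn.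
have qQ : q %| Q by rewrite /Q p_part -(prednK e0) expnS dvdn_mulr.
set c := chinese Q N r 1.
have cq : c %% q = r.
  by rewrite -(modn_dvdm c qQ) (chinese_modl cQN) modn_dvdm // modn_small.
exists c; split=> //.
rewrite -nQ coprimeMl; apply/andP; split.
  rewrite /Q p_part coprime_pexpl // -coprime_modr cq prime_coprime //.
  by apply/negP => /(dvdn_leq r0); rewrite leqNgt rq.
by rewrite -coprime_modr (chinese_modr cQN) coprime_modr coprimen1.
Qed.

Section Count.
Variables (n' k : nat).
Local Notation R := 'I_n'.+2.
Definition Kset : {set {ffun 'I_k -> R}} :=
  [set x : {ffun 'I_k -> R} | [forall i, x i \is a GRing.unit]].
Definition Aset (D : 'I_k -> R) (b : R) : {set {ffun 'I_k -> R}} :=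
  [set x in Kset | (\sum_i D i * x i == b)%R].
Definition upd (j : 'I_k) (c : R) (x : {ffun 'I_k -> R}) : {ffun 'I_k -> R} :=
  [ffun l => if l == j then (c * x l)%R else x l].

Lemma sum_split (D : 'I_k -> R) j (x y : {ffun 'I_k -> R}) :
  (forall l, l != j -> x l = y l) ->
  (\sum_i D i * x i)%R = (\sum_i D i * y i)%R -> (D j * x j = D j * y j)%R.
Proof.
move=> Hxy; rewrite (bigD1 j) //= [X in _ = X](bigD1 j) //=.
rewrite (eq_bigr (fun i => D i * y i)%R); last by move=> i /Hxy ->.
by move/addIr.
Qed.

Lemma count_le j (D : 'I_k -> R) b s (v : 'I_s -> R) :
  (forall a, v a \is a GRing.unit) -> injective (fun a => D j * v a)%R ->
  s * #|Aset D b| <= #|Kset|.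
Proof.
move=> vU vI.
pose F (p : 'I_s * {ffun 'I_k -> R}) := upd j (v p.1) p.2.
have <- : #|[set F p | p in setX [set: 'I_s] (Aset D b)]| = s * #|Aset D b|.
  rewrite card_in_imset ?cardsX ?cardsT ?card_ord //.
  move=> [a x] [a' y]; rewrite !inE /= => /andP[/forallP xK /eqP Sx] /andP[/forallP yK /eqP Sy].
  rewrite /F /= => Eq0; have Eq l : (upd j (v a) x) l = (upd j (v a') y) l by rewrite Eq0.
  have Hl : forall l, l != j -> x l = y l.
    by move=> l /negbTE lj; move: (Eq l); rewrite !ffunE lj.
  have Ej : (v a * x j = v a' * y j)%R by move: (Eq j); rewrite !ffunE eqxx.
  have Dj := sum_split Hl (etrans Sx (esym Sy)).
  have Ha : a = a'.
    apply: vI => /=; apply: (mulIr (xK j)) => /=.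
    by rewrite -mulrA Ej mulrCA -Dj mulrCA mulrA.
  subst a'; congr pair; apply/ffunP => l.
  case: (eqVneq l j) => [->|/Hl //].
  exact: (mulrI (vU a)).
apply: subset_leq_card; apply/subsetP => _ /imsetP[[a x] /setXP[_ xA] ->].
move: xA; rewrite !inE /= => /andP[/forallP xK _].
apply/forallP => l; rewrite ffunE; case: ifP => _ //.
by rewrite unitrM vU xK.
Qed.

Lemma count_eq j (D : 'I_k -> R) s (v : 'I_s -> R) :
  (forall a, v a \is a GRing.unit) -> injective (fun a => D j * v a)%R ->
  (forall l, l != j -> D l = 0%R) ->
  (forall u, u \is a GRing.unit -> exists a, (D j * u = D j * v a)%R) ->
  s * #|Aset D (D j)| = #|Kset|.
Proof.
move=> vU vI D0 cov.
apply/eqP; rewrite eqn_leq (count_le (D j) vU vI) /=.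
pose F (p : 'I_s * {ffun 'I_k -> R}) := upd j (v p.1) p.2.
have -> : s * #|Aset D (D j)| = #|[set F p | p in setX [set: 'I_s] (Aset D (D j))]|.
  rewrite card_in_imset ?cardsX ?cardsT ?card_ord //.
  move=> [a x] [a' y]; rewrite !inE /=. move=> /andP[/forallP xK /eqP Sx] /andP[/forallP yK /eqP Sy].
  rewrite /F /= => Eq0; have Eq l : (upd j (v a) x) l = (upd j (v a') y) l by rewrite Eq0.
  have Hl : forall l, l != j -> x l = y l.
    by move=> l /negbTE lj; move: (Eq l); rewrite !ffunE lj.
  have Ej : (v a * x j = v a' * y j)%R by move: (Eq j); rewrite !ffunE eqxx.
  have Dj := sum_split Hl (etrans Sx (esym Sy)).
  have Ha : a = a'.
    apply: vI => /=; apply: (mulIr (xK j)) => /=.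
    by rewrite -mulrA Ej mulrCA -Dj mulrCA mulrA.
  subst a'; congr pair; apply/ffunP => l.
  case: (eqVneq l j) => [->|/Hl //].
  exact: (mulrI (vU a)).
apply: subset_leq_card; apply/subsetP => x xK.
have xK' := xK; move: xK'; rewrite inE => /forallP xU.
have [a Ha] := cov _ (xU j).
apply/imsetP; exists (a, upd j (v a)^-1%R x); last first.
  apply/ffunP => l; rewrite /F /upd /= !ffunE; case: (l == j) => //.
  by rewrite mulrA mulrV ?mul1r.
rewrite !inE /=; apply/andP; split.
  apply/forallP => l; rewrite ffunE; case: ifP => // _.
  by rewrite unitrM unitrV vU xU.
rewrite (bigD1 j) //= big1 ?addr0; last by move=> l /D0 ->; rewrite mul0r.
by rewrite ffunE eqxx mulrCA Ha mulrCA mulVr ?mulr1.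
Qed.
End Count.

Section R.
Variable n' : nat.
Local Notation n := n'.+2.
Local Notation R := 'I_n'.+2.

Lemma unitZ (x : R) : (x \is a GRing.unit) = coprime n x.
Proof. have := unitZpE x (isT : 1 < n); rewrite natr_Zp; exact. Qed.

Lemma family q s : prime q -> q %| n -> s < q ->
  exists v : 'I_s -> R, forall a, v a \is a GRing.unit /\ v a %% q = a.+1.
Proof.
move=> qp qn sq.
suff H : forall a : 'I_s, exists v : R, v \is a GRing.unit /\ v %% q = a.+1.
  by have [v Hv] := fin_all_exists H; exists v.
move=> a.
have [|c [cc cq]] := @units_mod n q a.+1 isT qp qn.
  by rewrite /= (leq_ltn_trans (ltn_ord a) sq).
exists (inZp c); split; first by rewrite unitZ /= coprime_modr.
by rewrite /= modn_dvdm.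
Qed.

Lemma gen_inj (d : R) : d != 0%R ->
  exists q, [/\ prime q, q %| n & forall u w : R, (d * u = d * w)%R -> u %% q = w %% q].
Proof.
move=> dn0.
have d0 : 0 < d.
  by rewrite lt0n; apply: contra dn0 => /eqP d0; apply/eqP/val_inj.
set g := gcdn d n; set M := n %/ g.
have g0 : 0 < g by rewrite gcdn_gt0 orbT.
have eN : n = g * M by rewrite mulnC divnK // dvdn_gcdr.
have gd : g <= d by apply: dvdn_leq => //; apply: dvdn_gcdl.
have dn : d < n := ltn_ord d.
have M1 : 1 < M by nia.
exists (pdiv M); split.
- exact: pdiv_prime.
- by apply: (dvdn_trans (pdiv_dvd M)); rewrite {1}eN dvdn_mull.
move=> u w /(congr1 val); rewrite !valZpM => E.
have := nt_cancel (isT : 0 < n) E.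
by rewrite -/g -/M => E'; rewrite -(modn_dvdm u (pdiv_dvd M)) E' modn_dvdm // pdiv_dvd.
Qed.

Lemma tight_char (u w : R) :
  ((((n %/ pdiv n)%:R : R) * u = ((n %/ pdiv n)%:R : R) * w)%R) <-> u %% pdiv n = w %% pdiv n.
Proof.
set p := pdiv n.
have pp : prime p by apply: pdiv_prime.
have p1 := prime_gt1 pp.
have eN : n = n %/ p * p by rewrite divnK // pdiv_dvd.
have np0 : 0 < n %/ p by rewrite divn_gt0 ?prime_gt0 // dvdn_leq // pdiv_dvd.
have vd : val ((n %/ p)%:R : R)%R = n %/ p by rewrite valZpn modn_small // ltn_Pdiv.
have key a c : ((n %/ p * a) %% n == (n %/ p * c) %% n) = (a %% p == c %% p).
  by rewrite {2 4}eN -!muln_modr eqn_pmul2l.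
split.
  by move=> /(congr1 val); rewrite !valZpM vd => /eqP; rewrite key => /eqP.
by move=> E; apply: val_inj; rewrite !valZpM vd; apply/eqP; rewrite key E.
Qed.

Lemma unit_mod_pos (u : R) q : u \is a GRing.unit -> prime q -> q %| n -> 0 < u %% q.
Proof.
rewrite unitZ => cu qp qn; rewrite lt0n; apply/negP => /eqP H.
have : coprime q u by apply: coprime_dvdl qn cu.
by rewrite prime_coprime // /dvdn H.
Qed.
End R.

Section Main.
Variables (n' k : nat).
Local Notation n := n'.+2.
Local Notation R := 'I_n'.+2.

Definition mkv (j : 'I_k) (d : R) : {ffun 'I_k -> R} := [ffun l => if l == j then d else 0%R].

Lemma keysT (t : 'I_k -> nat) : (forall i, t i = 1) -> grdh_keys n t = Kset n' k.
Proof.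
move=> ht1; apply/setP => x; rewrite !inE; apply: eq_forallb => i.
by rewrite ht1 unitZ /coprime gcdnC.
Qed.

Lemma keys_gt0 (t : 'I_k -> nat) : (forall i, 0 < t i /\ t i %| n) -> 0 < #|grdh_keys n t|.
Proof.
move=> ht; apply/card_gt0P; exists [ffun i => ((t i)%:R : R)%R].
rewrite inE; apply/forallP => i; rewrite ffunE valZpn gcdn_modl.
by apply/eqP/gcdn_idPl; case: (ht i).
Qed.

Lemma setA_eq (t : 'I_k -> nat) (m m' : {ffun 'I_k -> R}) (b : R) :
  grdh_keys n t = Kset n' k ->
  [set x in grdh_keys n t | upsilon_diff x m m' == b] = Aset (fun i => m i - m' i)%R b.
Proof.
move=> KE; apply/setP => x; rewrite KE !inE upsilon_diff_ring.
by rewrite val_eqE.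
Qed.

Lemma prob_le (a b s : nat) : 0 < b -> 0 < s -> s * a <= b ->
  ((a%:R / b%:R : rat) <= 1 / s%:R)%R.
Proof.
move=> b0 s0 le.
rewrite ler_pdivrMr ?ltr0n // mulrC mulrA ler_pdivlMr ?ltr0n // mulr1.
by rewrite -natrM ler_nat mulnC.
Qed.

Lemma prob_eq (a s : nat) : 0 < s * a -> ((a%:R / (s * a)%:R : rat) = 1 / s%:R)%R.
Proof.
rewrite muln_gt0 => /andP[s0 a0].
rewrite natrM invfM mulrCA divff ?mulr1 // ?pnatr_eq0 -?lt0n ?mul1r //.
Qed.
Lemma sum_mkv j d (x : {ffun 'I_k -> R}) :
  (\sum_i (mkv j d i - ([ffun => 0%R] : {ffun 'I_k -> R}) i) * x i)%R = (d * x j)%R.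
Proof.
rewrite (bigD1 j) // big1 => [|l /negbTE lj]; rewrite !ffunE ?eqxx ?lj.
  by rewrite subr0; apply: addr0.
by rewrite subr0 mul0r.
Qed.
End Main.

Unset Implicit Arguments.

Theorem mainTheorem4 (n k : nat) (t : 'I_k -> nat)
  (hn : 1 < n) (hk : 0 < k) (ht : forall i, 0 < t i /\ t i %| n) :
  ((exists eps : rat, (eps < 1)%R /\ almost_delta_universal n t eps)
     <-> (odd n /\ forall i, t i = 1))
  /\
  ((odd n /\ forall i, t i = 1) ->
     almost_delta_universal n t (1 / ((pdiv n)%:R - 1))%R
     /\ exists (m m' : {ffun 'I_k -> 'I_n}) (b : 'I_n),
          m != m' /\ grdh_prob t m m' b = (1 / ((pdiv n)%:R - 1))%R).
Proof.
move: hn ht; case: n => [|[|n']] // _ ht.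
set p := pdiv n'.+2.
have pp : prime p by apply: pdiv_prime.
have p1 := prime_gt1 pp.
have pn : p %| n'.+2 by apply: pdiv_dvd.
have Kpos := keys_gt0 ht.
have Part2 : odd n'.+2 /\ (forall i, t i = 1) ->
     almost_delta_universal n'.+2 t (1 / (p%:R - 1))%R
     /\ exists (m m' : {ffun 'I_k -> 'I_n'.+2}) (b : 'I_n'.+2),
          m != m' /\ grdh_prob t m m' b = (1 / (p%:R - 1))%R.
  move=> [on ht1].
  have eP : (p%:R - 1 : rat)%R = (p.-1)%:R%R.
    by rewrite -{1}(prednK (prime_gt0 pp)) -addn1 natrD addrK.
  rewrite eP.
  have KE := @keysT n' k t ht1.
  have p10 : 0 < p.-1 by rewrite -ltnS prednK ?prime_gt0.
  split.
    move=> m m' b mm'; rewrite /grdh_prob (setA_eq _ _ _ KE) KE.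
    set D := fun i => (m i - m' i)%R.
    have [j Dj] : exists j, D j != 0%R.
      case: (pickP (fun j => D j != 0%R)) => [j Hj | H]; first by exists j.
      case/negP: mm'; apply/eqP/ffunP => j; apply/eqP; rewrite -subr_eq0.
      by move: (H j) => /negbFE.
    have [q [qp qn qinj]] := gen_inj Dj.
    have pq : p <= q := pdiv_min_dvd (prime_gt1 qp) qn.
    have [|v Hv] := @family n' q p.-1 qp qn.
      by apply: leq_trans pq; rewrite prednK ?prime_gt0.
    have := @count_le n' k j D b p.-1 v (fun a => (Hv a).1).
    rewrite KE in Kpos.
    move=> H; apply: prob_le => //; apply: H.
    by move=> a a' /qinj; rewrite (Hv a).2 (Hv a').2 => -[] /val_inj.
  pose j0 : 'I_k := Ordinal hk.
  set d : 'I_n'.+2 := ((n'.+2 %/ p)%:R)%R.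
  have d0 : d != 0%R.
    apply/eqP => d0; have := proj1 (@tight_char n' 1%R 0%R); rewrite -/p -/d d0 !mul0r => /(_ erefl).
    by rewrite /= mod0n modn_small.
  exists (@mkv n' k j0 d), [ffun => 0%R], d; split.
    apply/negP => /eqP /ffunP /(_ j0); rewrite !ffunE eqxx => E; by rewrite E eqxx in d0.
  rewrite /grdh_prob (setA_eq _ _ _ KE) KE.
  set D := fun i => (mkv j0 d i - [ffun => 0%R] i)%R.
  have Dj : D j0 = d by rewrite /D !ffunE eqxx subr0.
  have D0 : forall l, l != j0 -> D l = 0%R.
    by move=> l /negbTE; rewrite /D !ffunE => ->; rewrite subr0.
  have [|v Hv] := @family n' p p.-1 pp pn; first by rewrite prednK ?prime_gt0.
  have inj : injective (fun a => D j0 * v a)%R.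
    move=> a a' /=; rewrite Dj => /tight_char; rewrite (Hv a).2 (Hv a').2 => -[] /val_inj.
    done.
  have cov : forall u, u \is a GRing.unit -> exists a, (D j0 * u = D j0 * v a)%R.
    move=> u uU; have u0 := unit_mod_pos uU pp pn.
    have ur : (u %% p).-1 < p.-1.
      have := ltn_pmod u (prime_gt0 pp); lia.
    exists (Ordinal ur); rewrite Dj; apply/tight_char; rewrite (Hv _).2 /= prednK //.
  have H := @count_eq n' k j0 D p.-1 v (fun a => (Hv a).1) inj D0 cov.
  rewrite -Dj -H; apply: prob_eq; rewrite H -KE //.
split; last exact: Part2.
split.
  move=> [eps [eps1 U]].
  have key : forall (j : 'I_k) (a c : nat), 0 < a < n'.+2 ->
      (forall x : {ffun 'I_k -> 'I_n'.+2}, x \in grdh_keys n'.+2 t ->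
         (a * x j) %% n'.+2 = c %% n'.+2) -> False.
    move=> j a c /andP[a0 an] Hx.
    have := U (@mkv n' k j (a%:R)%R) [ffun => 0%R] (c%:R)%R.
    have mm : @mkv n' k j (a%:R)%R != [ffun => 0%R].
      apply/eqP => /ffunP /(_ j); rewrite !ffunE eqxx => /(congr1 val).
      by rewrite valZpn modn_small //= => a00; rewrite a00 in a0.
    move=> /(_ mm); rewrite /grdh_prob.
    rewrite (_ : [set x in grdh_keys n'.+2 t | _] = grdh_keys n'.+2 t); last first.
      apply/setP => x; rewrite inE; case: (boolP (x \in _)) => //= xK.
      rewrite upsilon_diff_ring sum_mkv valZpM valZpn modnMml Hx //. by rewrite Zp_nat /= eqxx.
    rewrite divff ?pnatr_eq0 -?lt0n // => le1.
    by move: (le_lt_trans le1 eps1); rewrite ltxx.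
  case: (pickP (fun i => t i != 1)) => [j tj | H].
    exfalso; have [tj0 tjn] := ht j.
    have tj1 : 1 < t j by rewrite ltn_neqAle eq_sym tj tj0.
    apply: (key j (n'.+2 %/ t j) 0).
      by rewrite divn_gt0 ?(dvdn_leq _ tjn) ?ltn_Pdiv // ltnW.
    move=> x; rewrite inE => /forallP /(_ j) /eqP xj.
    have : t j %| x j by rewrite -xj dvdn_gcdl.
    move/dvdnP => [y ->].
    by rewrite mulnCA divnK // modnMl mod0n.
  have ht1 : forall i, t i = 1 by move=> i; apply/eqP; move: (H i) => /= /negbFE.
  split=> //; case: (boolP (odd n'.+2)) => // ev; exfalso.
  pose j0 : 'I_k := Ordinal hk.
  apply: (key j0 (n'.+2 %/ 2) (n'.+2 %/ 2)).
    by rewrite divn_gt0 //= ltn_Pdiv.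
  move=> x; rewrite (@keysT n' k t ht1) inE => /forallP /(_ j0); rewrite unitZ => cx.
  have two : 2 %| n'.+2 by rewrite dvdn2.
  have ox : odd (x j0) by rewrite -coprime2n; apply: coprime_dvdl two cx.
  set e := n'.+2 %/ 2.
  have eN : n'.+2 = e * 2 by rewrite divnK.
  rewrite -(odd_double_half (x j0)) ox -muln2.
  by rewrite mulnDr muln1 mulnCA -eN addnC modnMDl.
move=> [on ht1]; exists (1 / (p%:R - 1))%R; split; last exact: (Part2 (conj on ht1)).1.
have eP : (p%:R - 1 : rat)%R = (p.-1)%:R%R.
  by rewrite -{1}(prednK (prime_gt0 pp)) -addn1 natrD addrK.
have p2 : p != 2 by apply/eqP => p2; move: pn; rewrite p2 dvdn2 on.
have p3 : 1 < p.-1 by lia.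
by rewrite eP ltr_pdivrMr ?ltr0n ?mul1r ?ltr1n // ltnW.
Qed.
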